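(* Let $V=\mathbb C^n$ with $n$ even and consider the rational map $\phi:\mathbb P(\Lambda^2V)\times\mathbb P(\Lambda^2V)\dashrightarrow\mathbb P(S^2V)$, $([A],[B])\mapsto[AJB-BJA]$. (a) If $n=2$, then $AJB-BJA=0$ for all $A,B\in\Lambda^2V$, so $\phi$ is nowhere defined. (b) If $n=4$, the image of $\phi$ in $\mathbb P^9=\mathbb P(S^2\mathbb C^4)$ is a Grassmannian $\mathbb G(2,5)$, i.e. a subvariety projectively equivalent to the Plücker embedding of the Grassmannian of $2$-planes in $\mathbb C^5$ in $\mathbb P(\Lambda^2\mathbb C^5)\cong\mathbb P^9$.
   Context: $\Lambda^2V$ and $S^2V$ denote skew-symmetric and symmetric $n\times n$ complex matrices, $n=2p$, and $J=\begin{bmatrix}0&I_p\\-I_p&0\end{bmatrix}$. *)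

(* Defs.v *)
From HB Require Import structures.
From mathcomp Require Import all_boot all_order all_algebra.
Set Implicit Arguments. Unset Strict Implicit. Unset Printing Implicit Defensive.
Import GRing.Theory Num.Theory.
Local Open Scope ring_scope.

Definition Jmx (R : pzRingType) (p : nat) : 'M[R]_(p + p) :=
  block_mx 0 1%:M (- 1%:M) 0.

Definition skew_mat (R : pzRingType) (n : nat) (A : 'M[R]_n) : Prop := A^T = - A.
Definition sym_mat (R : pzRingType) (n : nat) (A : 'M[R]_n) : Prop := A^T = A.

Definition phimx (R : pzRingType) (p : nat) (A B : 'M[R]_(p + p)) : 'M[R]_(p + p) :=
  A *m Jmx R p *m B - B *m Jmx R p *m A.

(* S spans a projective point in the image of phi : P(Λ²V) x P(Λ²V) --> P(S²V),
   i.e. [S] = [A J B - B J A] for skew A, B at which phi is defined. *)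
Definition in_image_phi (R : pzRingType) (p : nat) (S : 'M[R]_(p + p)) : Prop :=
  exists A B : 'M[R]_(p + p),
    [/\ skew_mat A, skew_mat B, phimx A B != 0 &
        exists c : R, c != 0 /\ S = c *: phimx A B].

(* K (a skew m x m matrix, i.e. an element of Λ²R^m) spans a point of the
   Plücker-embedded Grassmannian G(2,m): [K] = [u ∧ v] with u, v linearly
   independent, where u ∧ v is represented by u^T v - v^T u. *)
Definition in_plucker_grass2 (R : fieldType) (m : nat) (K : 'M[R]_m) : Prop :=
  exists u v : 'rV[R]_m,
    row_free (col_mx u v) /\
    exists c : R, c != 0 /\ K = c *: (u^T *m v - v^T *m u).

(* Main.v *)
Require Import Defs.
From HB Require Import structures.
From mathcomp Require Import all_boot all_order all_algebra.
From mathcomp.algebra_tactics Require Import ring.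
Import GRing.Theory Num.Theory.
Local Open Scope ring_scope.

Definition o0 : 'I_(2+2) := lshift 2 (@Ordinal 2 0 isT).
Definition o1 : 'I_(2+2) := lshift 2 (@Ordinal 2 1 isT).
Definition o2 : 'I_(2+2) := rshift 2 (@Ordinal 2 0 isT).
Definition o3 : 'I_(2+2) := rshift 2 (@Ordinal 2 1 isT).

Lemma ord4_cases (i : 'I_(2+2)) : [\/ i = o0, i = o1, i = o2 | i = o3].
Proof.
case: i => [[|[|[|[|k]]]] Hi]; [apply: Or41|apply: Or42|apply: Or43|apply: Or44|by []];
  exact: val_inj.
Qed.

Definition q0 : 'I_5 := @Ordinal 5 0 isT.
Definition q1 : 'I_5 := @Ordinal 5 1 isT.
Definition q2 : 'I_5 := @Ordinal 5 2 isT.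
Definition q3 : 'I_5 := @Ordinal 5 3 isT.
Definition q4 : 'I_5 := @Ordinal 5 4 isT.

Lemma ord5_cases (i : 'I_5) : i = q0 \/ i = q1 \/ i = q2 \/ i = q3 \/ i = q4.
Proof.
case: i => [[|[|[|[|[|k]]]]] Hi];
  [left|right;left|right;right;left|right;right;right;left|right;right;right;right|by []];
  exact: val_inj.
Qed.

Ltac c4 i := case: (ord4_cases i) => [->|->|->|->].
Ltac c5 i := case: (ord5_cases i) => [->|[->|[->|[->|->]]]].

Definition mxT (R : pzRingType) m n (l : seq (seq R)) : 'M[R]_(m,n) :=
  \matrix_(i,j) nth 0 (nth [::] l i) j.
Arguments mxT {R m n}.

Lemma JmxE (R : pzRingType) : Jmx R 2 =
  mxT [:: [::0;0;1;0]; [::0;0;0;1]; [::-1;0;0;0]; [::0;-1;0;0]].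
Proof.
apply/matrixP => i j; rewrite /Jmx.
by case: (ord4_cases i) => [->|->|->|->]; case: (ord4_cases j) => [->|->|->|->];
  rewrite ?(block_mxEul, block_mxEur, block_mxEdl, block_mxEdr) !mxE /= ?oppr0.
Qed.

Section Comp.
Variable R : comPzRingType.

Definition skew4 (a b c d e g : R) : 'M[R]_(2+2) :=
  mxT [:: [::0;a;b;c]; [::-a;0;d;e]; [::-b;-d;0;g]; [::-c;-e;-g;0]].

Definition sym4 (s00 s01 s02 s03 s11 s12 s13 s22 s23 s33 : R) : 'M[R]_(2+2) :=
  mxT [:: [::s00;s01;s02;s03]; [::s01;s11;s12;s13]; [::s02;s12;s22;s23];
          [::s03;s13;s23;s33]].

Definition skew5 (k01 k02 k03 k04 k12 k13 k14 k23 k24 k34 : R) : 'M[R]_5 :=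
  mxT [:: [::0;k01;k02;k03;k04]; [::-k01;0;k12;k13;k14]; [::-k02;-k12;0;k23;k24];
          [::-k03;-k13;-k23;0;k34]; [::-k04;-k14;-k24;-k34;0]].

Definition fmx (S : 'M[R]_(2+2)) : 'M[R]_5 :=
  skew5 (- S o0 o0) (S o1 o1) (- S o0 o2 - S o1 o3) (S o0 o1)
        (- S o0 o2 + S o1 o3) (- S o3 o3) (S o0 o3) (S o2 o2) (- S o1 o2) (S o2 o3).

Definition wedge (u v : 'rV[R]_5) : 'M[R]_5 := u^T *m v - v^T *m u.

Definition w2 (A : 'M[R]_(2+2)) : 'rV[R]_5 :=
  mxT [:: [:: 2 * A o0 o1; 2 * A o0 o3; 2 * A o1 o2; 2 * A o2 o3; A o0 o2 - A o1 o3]].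

Definition sec (u : 'rV[R]_5) : 'M[R]_(2+2) :=
  skew4 (u 0 q0) (u 0 q4) (u 0 q1) (u 0 q2) (- u 0 q4) (u 0 q3).


Lemma mul4 m00 m01 m02 m03 m10 m11 m12 m13 m20 m21 m22 m23 m30 m31 m32 m33 n00 n01 n02 n03 n10 n11 n12 n13 n20 n21 n22 n23 n30 n31 n32 n33 :
  (mxT [:: [:: m00; m01; m02; m03]; [:: m10; m11; m12; m13]; [:: m20; m21; m22; m23]; [:: m30; m31; m32; m33]] : 'M[R]_(2+2)) *m (mxT [:: [:: n00; n01; n02; n03]; [:: n10; n11; n12; n13]; [:: n20; n21; n22; n23]; [:: n30; n31; n32; n33]] : 'M[R]_(2+2)) =
  mxT [:: [:: m00 * n00 + m01 * n10 + m02 * n20 + m03 * n30; m00 * n01 + m01 * n11 + m02 * n21 + m03 * n31; m00 * n02 + m01 * n12 + m02 * n22 + m03 * n32; m00 * n03 + m01 * n13 + m02 * n23 + m03 * n33]; [:: m10 * n00 + m11 * n10 + m12 * n20 + m13 * n30; m10 * n01 + m11 * n11 + m12 * n21 + m13 * n31; m10 * n02 + m11 * n12 + m12 * n22 + m13 * n32; m10 * n03 + m11 * n13 + m12 * n23 + m13 * n33]; [:: m20 * n00 + m21 * n10 + m22 * n20 + m23 * n30; m20 * n01 + m21 * n11 + m22 * n21 + m23 * n31; m20 * n02 + m21 * n12 + m22 * n22 + m23 * n32; m20 * n03 + m21 * n13 + m22 * n23 + m23 * n33]; [:: m30 * n00 + m31 * n10 + m32 * n20 + m33 * n30; m30 *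 n01 + m31 * n11 + m32 * n21 + m33 * n31; m30 * n02 + m31 * n12 + m32 * n22 + m33 * n32; m30 * n03 + m31 * n13 + m32 * n23 + m33 * n33]].
Proof.
apply/matrixP => i j; c4 i; c4 j; rewrite !(mxE, big_ord_recl, big_ord0) /=; ring.
Qed.

Lemma sub4 m00 m01 m02 m03 m10 m11 m12 m13 m20 m21 m22 m23 m30 m31 m32 m33 n00 n01 n02 n03 n10 n11 n12 n13 n20 n21 n22 n23 n30 n31 n32 n33 :
  (mxT [:: [:: m00; m01; m02; m03]; [:: m10; m11; m12; m13]; [:: m20; m21; m22; m23]; [:: m30; m31; m32; m33]] : 'M[R]_(2+2)) - (mxT [:: [:: n00; n01; n02; n03]; [:: n10; n11; n12; n13]; [:: n20; n21; n22; n23]; [:: n30; n31; n32; n33]] : 'M[R]_(2+2)) =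
  mxT [:: [:: m00 - n00; m01 - n01; m02 - n02; m03 - n03]; [:: m10 - n10; m11 - n11; m12 - n12; m13 - n13]; [:: m20 - n20; m21 - n21; m22 - n22; m23 - n23]; [:: m30 - n30; m31 - n31; m32 - n32; m33 - n33]].
Proof.
by apply/matrixP => i j; c4 i; c4 j; rewrite !mxE /=.
Qed.

Lemma eq4 m00 m01 m02 m03 m10 m11 m12 m13 m20 m21 m22 m23 m30 m31 m32 m33 n00 n01 n02 n03 n10 n11 n12 n13 n20 n21 n22 n23 n30 n31 n32 n33 :
  m00 = n00 -> m01 = n01 -> m02 = n02 -> m03 = n03 -> m10 = n10 -> m11 = n11 -> m12 = n12 -> m13 = n13 -> m20 = n20 -> m21 = n21 -> m22 = n22 -> m23 = n23 -> m30 = n30 -> m31 = n31 -> m32 = n32 -> m33 = n33 ->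
  (mxT [:: [:: m00; m01; m02; m03]; [:: m10; m11; m12; m13]; [:: m20; m21; m22; m23]; [:: m30; m31; m32; m33]] : 'M[R]_(2+2)) = mxT [:: [:: n00; n01; n02; n03]; [:: n10; n11; n12; n13]; [:: n20; n21; n22; n23]; [:: n30; n31; n32; n33]].
Proof. by move=> -> -> -> -> -> -> -> -> -> -> -> -> -> -> -> ->. Qed.

Lemma eq5 k0 k1 k2 k3 k4 k5 k6 k7 k8 k9 l0 l1 l2 l3 l4 l5 l6 l7 l8 l9 :
  k0 = l0 -> k1 = l1 -> k2 = l2 -> k3 = l3 -> k4 = l4 -> k5 = l5 -> k6 = l6 -> k7 = l7 -> k8 = l8 -> k9 = l9 -> skew5 k0 k1 k2 k3 k4 k5 k6 k7 k8 k9 = skew5 l0 l1 l2 l3 l4 l5 l6 l7 l8 l9.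
Proof. by move=> -> -> -> -> -> -> -> -> -> ->. Qed.

Lemma scale5 (c : R) k0 k1 k2 k3 k4 k5 k6 k7 k8 k9 :
  c *: skew5 k0 k1 k2 k3 k4 k5 k6 k7 k8 k9 = skew5 (c * k0) (c * k1) (c * k2) (c * k3) (c * k4) (c * k5) (c * k6) (c * k7) (c * k8) (c * k9).
Proof. apply/matrixP => i j; c5 i; c5 j; rewrite !mxE; cbn [nth nat_of_ord q0 q1 q2 q3 q4]; ring. Qed.

Lemma add5 k0 k1 k2 k3 k4 k5 k6 k7 k8 k9 l0 l1 l2 l3 l4 l5 l6 l7 l8 l9 :
  skew5 k0 k1 k2 k3 k4 k5 k6 k7 k8 k9 + skew5 l0 l1 l2 l3 l4 l5 l6 l7 l8 l9 = skew5 (k0 + l0) (k1 + l1) (k2 + l2) (k3 + l3) (k4 + l4) (k5 + l5) (k6 + l6) (k7 + l7) (k8 + l8) (k9 + l9).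
Proof. apply/matrixP => i j; c5 i; c5 j; rewrite !mxE; cbn [nth nat_of_ord q0 q1 q2 q3 q4]; ring. Qed.

Lemma phi_skew a b c d e g a' b' c' d' e' g' :
  phimx (skew4 a b c d e g) (skew4 a' b' c' d' e' g') =
  sym4 ((- 2) * a * c' + 2 * c * a') (- (a * e') + - (b * a') + e * a' + a * b') (- (a * g') + - (c * d') + g * a' + d * c') (- (b * c') + - (c * e') + c * b' + e * c') (2 * a * d' + (- 2) * d * a') (- (d * b') + - (e * d') + b * d' + d * e') (- (a * g') + - (d * c') + g * a' + c * d') (2 * d * g' + (- 2) * g * d') (- (b * g') + - (g * e') + g * b' + e * g') ((- 2) * c * g' + 2 * g * c').
Proof.
rewrite /phimx JmxE /skew4 /sym4 !mul4 sub4; apply: eq4; ring.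
Qed.


Lemma fmx_sym4 s00 s01 s02 s03 s11 s12 s13 s22 s23 s33 :
  fmx (sym4 s00 s01 s02 s03 s11 s12 s13 s22 s23 s33) =
  skew5 (- s00) s11 (- s02 - s13) s01 (- s02 + s13) (- s33) s03 s22 (- s12) s23.
Proof. by rewrite /fmx /sym4 !mxE. Qed.

Lemma w2_skew4 a b c d e g :
  w2 (skew4 a b c d e g) = mxT [:: [:: 2 * a; 2 * c; 2 * d; 2 * g; b - e]].
Proof. by rewrite /w2 /skew4 !mxE. Qed.

Lemma wedgeE (u v : 'rV[R]_5) : wedge u v =
  skew5 (u 0 q0 * v 0 q1 - v 0 q0 * u 0 q1) (u 0 q0 * v 0 q2 - v 0 q0 * u 0 q2)
        (u 0 q0 * v 0 q3 - v 0 q0 * u 0 q3) (u 0 q0 * v 0 q4 - v 0 q0 * u 0 q4)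
        (u 0 q1 * v 0 q2 - v 0 q1 * u 0 q2) (u 0 q1 * v 0 q3 - v 0 q1 * u 0 q3)
        (u 0 q1 * v 0 q4 - v 0 q1 * u 0 q4) (u 0 q2 * v 0 q3 - v 0 q2 * u 0 q3)
        (u 0 q2 * v 0 q4 - v 0 q2 * u 0 q4) (u 0 q3 * v 0 q4 - v 0 q3 * u 0 q4).
Proof.
apply/matrixP => i j; rewrite /wedge; c5 i; c5 j;
  rewrite !(mxE, big_ord_recl, big_ord0) /=; ring.
Qed.

Lemma wedge5 u0 u1 u2 u3 u4 v0 v1 v2 v3 v4 :
  wedge (mxT [:: [:: u0; u1; u2; u3; u4]]) (mxT [:: [:: v0; v1; v2; v3; v4]]) =
  skew5 (u0 * v1 - v0 * u1) (u0 * v2 - v0 * u2) (u0 * v3 - v0 * u3) (u0 * v4 - v0 * u4)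
        (u1 * v2 - v1 * u2) (u1 * v3 - v1 * u3) (u1 * v4 - v1 * u4)
        (u2 * v3 - v2 * u3) (u2 * v4 - v2 * u4) (u3 * v4 - v3 * u4).
Proof. by rewrite wedgeE !mxE. Qed.

Lemma K1 a b c d e g a' b' c' d' e' g' :
  2 *: fmx (phimx (skew4 a b c d e g) (skew4 a' b' c' d' e' g')) =
  wedge (w2 (skew4 a b c d e g)) (w2 (skew4 a' b' c' d' e' g')).
Proof. rewrite phi_skew fmx_sym4 !w2_skew4 wedge5 scale5; apply: eq5; ring. Qed.

Lemma K2 (u v : 'rV[R]_5) : fmx (phimx (sec u) (sec v)) = 2 *: wedge u v.
Proof. rewrite /sec phi_skew fmx_sym4 wedgeE scale5; apply: eq5; ring. Qed.


Lemma sym4_sym s00 s01 s02 s03 s11 s12 s13 s22 s23 s33 :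
  sym_mat (sym4 s00 s01 s02 s03 s11 s12 s13 s22 s23 s33).
Proof. by apply/matrixP => i j; c4 i; c4 j; rewrite !mxE. Qed.

Lemma skew4_skew a b c d e g : skew_mat (skew4 a b c d e g).
Proof. by apply/matrixP => i j; c4 i; c4 j; rewrite !mxE /= ?opprK ?oppr0. Qed.

Lemma skew5_skew k0 k1 k2 k3 k4 k5 k6 k7 k8 k9 :
  skew_mat (skew5 k0 k1 k2 k3 k4 k5 k6 k7 k8 k9).
Proof. by apply/matrixP => i j; c5 i; c5 j; rewrite !mxE /= ?opprK ?oppr0. Qed.

Lemma fmx_lin : linear fmx.
Proof.
move=> a S T; rewrite /fmx scale5 add5; apply: eq5; rewrite !mxE; ring.
Qed.

HB.instance Definition _ := GRing.isLinear.Build R 'M[R]_(2+2) 'M[R]_5 *:%R fmx fmx_lin.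

End Comp.
Arguments skew4 {R}. Arguments sym4 {R}. Arguments skew5 {R}. Arguments fmx {R}.
Arguments wedge {R}. Arguments w2 {R}. Arguments sec {R}.

Section Field.
Variable R : numFieldType.

Lemma self_opp (x : R) : x = - x -> x = 0.
Proof.
by move/eqP; rewrite -subr_eq0 opprK -mulr2n mulrn_eq0 /= => /eqP.
Qed.

Lemma two_neq0 : (2 : R) != 0.
Proof. by rewrite pnatr_eq0. Qed.

Lemma skew4E {A : 'M[R]_(2+2)} : skew_mat A ->
  A = skew4 (A o0 o1) (A o0 o2) (A o0 o3) (A o1 o2) (A o1 o3) (A o2 o3).
Proof.
move/matrixP => H.
have Hs i j : A j i = - A i j by have := H i j; rewrite !mxE.
have Hd i : A i i = 0 by apply: self_opp; apply: Hs.
apply/matrixP => i j; c4 i; c4 j; rewrite !mxE /=;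
  first [done | exact: Hd | exact: Hs].
Qed.

Lemma skew5E {A : 'M[R]_5} : skew_mat A ->
  A = skew5 (A q0 q1) (A q0 q2) (A q0 q3) (A q0 q4) (A q1 q2) (A q1 q3) (A q1 q4)
            (A q2 q3) (A q2 q4) (A q3 q4).
Proof.
move/matrixP => H.
have Hs i j : A j i = - A i j by have := H i j; rewrite !mxE.
have Hd i : A i i = 0 by apply: self_opp; apply: Hs.
apply/matrixP => i j; c5 i; c5 j; rewrite !mxE /=;
  first [done | exact: Hd | exact: Hs].
Qed.

Lemma sym4E {A : 'M[R]_(2+2)} : sym_mat A ->
  A = sym4 (A o0 o0) (A o0 o1) (A o0 o2) (A o0 o3) (A o1 o1) (A o1 o2) (A o1 o3)
           (A o2 o2) (A o2 o3) (A o3 o3).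
Proof.
move/matrixP => H.
have Hs i j : A j i = A i j by have := H i j; rewrite !mxE.
apply/matrixP => i j; c4 i; c4 j; rewrite !mxE /=; first [done | exact: Hs].
Qed.

Definition gmx (K : 'M[R]_5) : 'M[R]_(2+2) :=
  sym4 (- K q0 q1) (K q0 q4) (- (K q0 q3 + K q1 q2) / 2) (K q1 q4) (K q0 q2)
       (- K q2 q4) ((K q1 q2 - K q0 q3) / 2) (K q2 q3) (K q3 q4) (- K q1 q3).

Lemma g_f {S : 'M[R]_(2+2)} : sym_mat S -> gmx (fmx S) = S.
Proof.
move=> HS; rewrite {2}(sym4E HS) /gmx /fmx /skew5 !mxE /=.
by rewrite /sym4; apply: eq4; field.
Qed.

Lemma f_g {K : 'M[R]_5} : skew_mat K -> fmx (gmx K) = K.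
Proof.
move=> HK; rewrite {2}(skew5E HK) /gmx fmx_sym4.
by apply: eq5; field.
Qed.

Lemma f_inj (S T : 'M[R]_(2+2)) : sym_mat S -> sym_mat T -> fmx S = fmx T -> S = T.
Proof. by move=> HS HT E; rewrite -(g_f HS) -(g_f HT) E. Qed.

Lemma phi_sym (A B : 'M[R]_(2+2)) : skew_mat A -> skew_mat B -> sym_mat (phimx A B).
Proof. by move=> HA HB; rewrite (skew4E HA) (skew4E HB) phi_skew; apply: sym4_sym. Qed.

Lemma fphi (A B : 'M[R]_(2+2)) : skew_mat A -> skew_mat B ->
  2 *: fmx (phimx A B) = wedge (w2 A) (w2 B).
Proof. by move=> HA HB; rewrite (skew4E HA) (skew4E HB); apply: K1. Qed.

End Field.
Arguments gmx {R}.


Definition p0 : 'I_(1+1) := lshift 1 ord0.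
Definition p1 : 'I_(1+1) := rshift 1 ord0.

Lemma ord2_cases (i : 'I_(1+1)) : i = p0 \/ i = p1.
Proof. case: i => [[|[|k]] Hi]; [left|right|by []]; exact: val_inj. Qed.

Ltac c2 i := case: (ord2_cases i) => [->|->].

Section RF.
Variable R : fieldType.

Lemma sum_delta m (F : 'I_m -> R) i : \sum_k F k * (k == i)%:R = F i.
Proof.
rewrite (bigD1 i) //= eqxx mulr1 big1 ?addr0 // => k /negbTE ->; by rewrite mulr0.
Qed.

Lemma sum2 m (F : 'I_m -> R) i j a b :
  \sum_k F k * ((k == i)%:R * a + (k == j)%:R * b) = F i * a + F j * b.
Proof.
rewrite (eq_bigr (fun k => F k * (k == i)%:R * a + F k * (k == j)%:R * b));
  last by move=> k _; ring.
by rewrite big_split /= -!big_distrl /= !sum_delta.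
Qed.

Lemma rf_wedge m (u v : 'rV[R]_m) :
  row_free (col_mx u v) -> u^T *m v - v^T *m u != 0.
Proof.
move/row_freeP => [Y HY]; apply/eqP => /eqP; rewrite subr_eq0 => /eqP E.
rewrite mul_col_mx in HY.
have E2 : (u *m Y)^T *m (v *m Y) = (v *m Y)^T *m (u *m Y).
  by rewrite !trmx_mul -!mulmxA (mulmxA u^T) E -mulmxA.
have Hu a : \sum_j u ord0 j * Y j a = (1%:M : 'M[R]_(1+1)) p0 a.
  by move/matrixP: HY => /(_ p0 a); rewrite /p0 col_mxEu !mxE.
have Hv a : \sum_j v ord0 j * Y j a = (1%:M : 'M[R]_(1+1)) p1 a.
  by move/matrixP: HY => /(_ p1 a); rewrite /p1 col_mxEd !mxE.
move/matrixP: E2 => /(_ p0 p1); rewrite !mxE !big_ord1 !mxE !Hu !Hv !mxE /=.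
by rewrite mul1r mul0r; apply/eqP; rewrite oner_neq0.
Qed.


Lemma wedge_rf m (u v : 'rV[R]_m) :
  u^T *m v - v^T *m u != 0 -> row_free (col_mx u v).
Proof.
move=> H.
have [i [j Hd]] : exists i j, u ord0 i * v ord0 j - v ord0 i * u ord0 j != 0.
  case: (pickP (fun ij : 'I_m * 'I_m =>
     u ord0 ij.1 * v ord0 ij.2 - v ord0 ij.1 * u ord0 ij.2 != 0)) => [[i j] Hd | Hn].
    by exists i, j.
  exfalso; move/eqP: H; apply; apply/matrixP => i j.
  rewrite !mxE !big_ord1 !mxE; have := Hn (i, j); rewrite /= => /negbFE /eqP.
  done.
pose A (l : 'I_(1+1)) := (if nat_of_ord l == 0%N then v ord0 j else - u ord0 j) /
   (u ord0 i * v ord0 j - v ord0 i * u ord0 j).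
pose B (l : 'I_(1+1)) := (if nat_of_ord l == 0%N then - v ord0 i else u ord0 i) /
   (u ord0 i * v ord0 j - v ord0 i * u ord0 j).
apply/row_freeP; exists (\matrix_(k, l) ((k == i)%:R * A l + (k == j)%:R * B l)).
rewrite mul_col_mx; apply/matrixP => r l.
case: (ord2_cases r) => ->; rewrite ?/p0 ?/p1 ?col_mxEu ?col_mxEd mxE;
  under eq_bigr => k _ do rewrite mxE;
  rewrite sum2 /A /B; case: (ord2_cases l) => ->; rewrite !mxE /=; by field.
Qed.

End RF.

Lemma JmxE1 (R : pzRingType) : Jmx R 1 = mxT [:: [:: 0; 1]; [:: -1; 0]].
Proof.
apply/matrixP => i j; rewrite /Jmx.
by c2 i; c2 j; rewrite ?(block_mxEul, block_mxEur, block_mxEdl, block_mxEdr) !mxE /= ?oppr0.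
Qed.

Lemma skew2E {R : numFieldType} {A : 'M[R]_(1+1)} : skew_mat A ->
  A = mxT [:: [:: 0; A p0 p1]; [:: - A p0 p1; 0]].
Proof.
move/matrixP => H.
have Hs i j : A j i = - A i j by have := H i j; rewrite !mxE.
have Hd i : A i i = 0 by apply: self_opp; apply: Hs.
apply/matrixP => i j; c2 i; c2 j; rewrite !mxE /=; first [done | exact: Hd | exact: Hs].
Qed.

Lemma partA (R : numFieldType) (A B : 'M[R]_(1+1)) :
  skew_mat A -> skew_mat B -> phimx A B = 0.
Proof.
move=> HA HB; rewrite /phimx (skew2E HA) (skew2E HB) JmxE1.
apply/matrixP => i j; c2 i; c2 j; rewrite !(mxE, big_ord_recl, big_ord0) /=; ring.
Qed.

Theorem mainTheorem12 (C : numClosedFieldType) :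
  (forall A B : 'M[C]_(1 + 1), skew_mat A -> skew_mat B -> phimx A B = 0) /\
  (exists f : {linear 'M[C]_(2 + 2) -> 'M[C]_5},
     (forall S, sym_mat S -> skew_mat (f S)) /\
     (forall S1 S2, sym_mat S1 -> sym_mat S2 -> f S1 = f S2 -> S1 = S2) /\
     (forall K, skew_mat K -> exists S, sym_mat S /\ f S = K) /\
     (forall S, sym_mat S -> (in_image_phi S <-> in_plucker_grass2 (f S)))).
Proof.
split; first exact: partA.
exists fmx; split; first by move=> S _; apply: skew5_skew.
split; first exact: f_inj.
split; first by move=> K HK; exists (gmx K); split; [apply: sym4_sym | apply: f_g].
move=> S HS; split.
- move=> [A [B [HA HB Hn [c [Hc ->]]]]].
  exists (w2 A), (w2 B); split.
    apply: wedge_rf; rewrite -/(wedge _ _) -fphi //.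
    rewrite scaler_eq0 negb_or two_neq0 /=; apply/eqP => Hf.
    move/eqP: Hn; apply; apply: f_inj; [exact: phi_sym | by rewrite /sym_mat trmx0 | ].
    by rewrite Hf linear0.
  exists (c / 2); split; first by rewrite mulf_neq0 // invr_eq0 two_neq0.
  rewrite -/(wedge _ _) -fphi // scalerA linearZ /=; congr (_ *: _).
  by rewrite mulfVK // two_neq0.
- move=> [u [v [Hrf [c [Hc HK]]]]].
  have Hw : wedge u v != 0 by apply: rf_wedge.
  have Hs (u' : 'rV[C]_5) : skew_mat (sec u') by apply: skew4_skew.
  exists (sec u), (sec v); split; [exact: Hs | exact: Hs | | ].
    apply/eqP => Hp; move: (K2 _ u v); rewrite Hp linear0 => /esym /eqP.
    by rewrite scaler_eq0 (negbTE (two_neq0 _)) (negbTE Hw).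
  exists (c / 2); split; first by rewrite mulf_neq0 // invr_eq0 two_neq0.
  apply: f_inj => //.
    by rewrite /sym_mat linearZ /= phi_sym //.
  by rewrite HK linearZ /= (K2 _ u v) scalerA mulfVK // two_neq0.
Qed.
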